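(* Let $\Delta x>0$, consider the homogeneous grid $x_j=x_1+(j-1)\Delta x$, let $M_-,M_+\in\mathbb{Z}$ with $M:=M_-+M_+\ge0$, and consider the stencil $\{i-M_-,\dots,i+M_+\}$ of $M+1$ grid points. Let $f$ be a real function defined at the points $x_{i+\ell}$, $f_{i+\ell}:=f(x_{i+\ell})$, let $p_f(x)=\sum_{m=0}^{M}c_{f,m}\left(\frac{x-x_i}{\Delta x}\right)^m$ be the polynomial of degree $\le M$ interpolating $f$ at $x_{i-M_-},\dots,x_{i+M_+}$, and let $p_h(x)=\sum_{m=0}^{M}c_{h,m}\left(\frac{x-x_i}{\Delta x}\right)^m$ be the polynomial of degree $\le M$ satisfying $p_f(x)=\frac{1}{\Delta x}\int_{x-\frac12\Delta x}^{x+\frac12\Delta x}p_h(\zeta)\,d\zeta$ for all $x$. Then, with $\xi:=(x-x_i)/\Delta x$, $$p_h(x_i+\xi\Delta x)=\sum_{\ell=-M_-}^{M_+}\alpha_{h,M_-,M_+,\ell}(\xi)f_{i+\ell},\qquad p_f(x_i+\xi\Delta x)=\sum_{\ell=-M_-}^{M_+}\alpha_{f,M_-,M_+,\ell}(\xi)f_{i+\ell},$$ where $\alpha_{h,M_-,M_+,\ell}$ and $\alpha_{f,M_-,M_+,\ell}$ are polynomials of degree $M$ in $\xi$, with coefficients depending only on $(M_-,M_+,\ell)$, given by $$\alpha_{h,M_-,M_+,\ell}(\xi)=\sum_{m=0}^{M}\left(\sum_{k=0}^{\lfloor (M-m)/2\rfloor}\frac{\tau_{2k}(m+2k)!}{m!}(V_{M_-,M_+}^{-1})_{m+2k+1,\ell+M_-+1}\right)\xi^m,$$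 $$\alpha_{f,M_-,M_+,\ell}(\xi)=\sum_{m=0}^{M}(V_{M_-,M_+}^{-1})_{m+1,\ell+M_-+1}\,\xi^m.$$
   Context: $V_{M_-,M_+}\in\mathbb{R}^{(M+1)\times(M+1)}$ is the (invertible) Vandermonde matrix with entries $(V_{M_-,M_+})_{ij}=(i-1-M_-)^{j-1}$ (with $0^0=1$). The numbers $\tau_{2k}$ are defined by $\tau_0=1$ and $\tau_{2k}=\sum_{s=0}^{k-1}\frac{-\tau_{2s}}{2^{2k-2s}(2k-2s+1)!}$ for $k>0$. *)

(* Defs.v *)
From HB Require Import structures.
From mathcomp Require Import all_boot all_order all_algebra.
From mathcomp Require Import all_classical all_reals all_analysis.
Set Implicit Arguments. Unset Strict Implicit. Unset Printing Implicit Defensive.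
Import Order.TTheory GRing.Theory Num.Theory.
Import numFieldNormedType.Exports.
Local Open Scope ring_scope.

Fixpoint tau_seq (R : fieldType) (n : nat) : seq R :=
  match n with
  | 0 => [:: 1]
  | n'.+1 =>
      let s := tau_seq R n' in
      rcons s (\sum_(j < n'.+1)
                 - nth 0 s j / (2 ^+ (2 * (n'.+1 - j)) * ((2 * (n'.+1 - j)).+1)`!%:R))
  end.

(* tau k = tau_{2k} of the paper. *)
Definition tau (R : fieldType) (k : nat) : R := nth 0 (tau_seq R k) k.

(* Vandermonde matrix V_{M-,M+} (0-based indices): V i j = (i - M_-)^j, 0^0 = 1. *)
Definition vdm (R : fieldType) (Mm : int) (M : nat) : 'M[R]_M.+1 :=
  \matrix_(i < M.+1, j < M.+1) ((i%:Z - Mm)%:~R) ^+ j.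

(* alpha_{f,M-,M+,l}(xi) with l = k - M_- (k : 'I_(M+1) is the column index l + M_-). *)
Definition alpha_f (R : fieldType) (Mm : int) (M : nat) (k : 'I_M.+1) (xi : R) : R :=
  \sum_(m < M.+1) (invmx (vdm R Mm M)) m k * xi ^+ m.

Definition alpha_h (R : fieldType) (Mm : int) (M : nat) (k : 'I_M.+1) (xi : R) : R :=
  \sum_(m < M.+1)
    (\sum_(j < ((M - m)./2).+1)
       tau R j * (m + 2 * j)`!%:R / m`!%:R
         * (invmx (vdm R Mm M)) (inord (m + 2 * j)) k) * xi ^+ m.

(* Main.v *)
Require Import Defs.
From HB Require Import structures.
From mathcomp Require Import all_boot all_order all_algebra.
From mathcomp Require Import all_classical all_reals all_analysis.
From mathcomp Require Import zify ring lra.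
Import Order.TTheory GRing.Theory Num.Theory.
Import numFieldNormedType.Exports.
Local Open Scope ring_scope.


Definition sj (R : fieldType) (j : nat) : R :=
  (2 ^+ (2 * j) * ((2 * j).+1)`!%:R)^-1.

Section Alg.
Variable R : fieldType.

Lemma tau_seq_size n : size (tau_seq R n) = n.+1.
Proof. by elim: n => [|n IH] //=; rewrite size_rcons IH. Qed.

Lemma tau_seq_nth n j : (j <= n)%N -> nth 0 (tau_seq R n) j = tau R j.
Proof.
elim: n => [|n IH]; first by rewrite leqn0 => /eqP ->.
rewrite leq_eqVlt => /orP [/eqP -> //|Hj].
by rewrite /= nth_rcons tau_seq_size Hj IH.
Qed.

Lemma tau0 : tau R 0 = 1.
Proof. by []. Qed.

Lemma sj0 : sj R 0 = 1.
Proof. by rewrite /sj muln0 expr0 mul1r /= invr1. Qed.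

Lemma tau_rec n : tau R n.+1 = \sum_(j < n.+1) - (tau R j * sj R (n.+1 - j)).
Proof.
rewrite /tau /= nth_rcons tau_seq_size ltnn eqxx.
apply: eq_bigr => j _; rewrite tau_seq_nth; last by rewrite -ltnS.
by rewrite /sj mulNr.
Qed.

Lemma tau_conv n : \sum_(k < n.+1) tau R k * sj R (n - k) = (n == 0)%:R.
Proof.
case: n => [|n]; first by rewrite big_ord1 tau0 sj0 mulr1.
rewrite big_ord_recr /= subnn sj0 mulr1 tau_rec sumrN subrr.
by [].
Qed.

Lemma shift_sum (V : zmodType) (F : nat -> V) K k :
  (forall n, (K <= n)%N -> F n = 0) ->
  \sum_(j < K) F (j + k)%N = \sum_(n < K | (k <= n)%N) F n.
Proof.
move=> HF.
have [kK|Kk] := leqP k K; last first.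
  rewrite big1; last by move=> j _; apply: HF; lia.
  by rewrite big1 // => n Hn; move: (ltn_ord n) => nK; lia.
rewrite -(big_mkord (fun n => (k <= n)%N) F) -(big_mkord xpredT (fun j => F (j + k)%N)).
rewrite [RHS](@big_cat_nat _ _ _ k) //= [X in _ = X + _]big_nat_cond [X in _ = X + _]big_pred0; last first.
  by move=> i; apply/negbTE/negP => /andP [] /andP [] *; lia.
rewrite add0r (@big_cat_nat _ _ _ (K - k)) ?leq_subr //= [X in X + _ = _]big_nat_cond [X in _ + X = _]big_nat_cond [X in _ + X = _]big1 ?addr0; last first.
  by move=> j /andP [] /andP [] *; apply: HF; lia.
have := big_addn 0 K k (fun i => (k <= i)%N) F; rewrite add0n => ->.
rewrite [RHS]big_nat_cond; apply: eq_bigl => i; rewrite leq_addl.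
by rewrite !andbT.
Qed.

Lemma inv_conv (V : lmodType R) (g : nat -> V) K :
  (forall n, (K <= n)%N -> g n = 0) ->
  \sum_(k < K) tau R k *: \sum_(j < K) sj R j *: g (j + k)%N = g 0%N.
Proof.
move=> Hg.
case: K Hg => [|K] Hg; first by rewrite big_ord0 Hg.
have E : forall k : 'I_K.+1, \sum_(j < K.+1) sj R j *: g (j + k)%N =
    \sum_(n < K.+1) (if (k <= n)%N then sj R (n - k) *: g n else 0).
  move=> k; rewrite -big_mkcond -(@shift_sum _ (fun n => sj R (n - k) *: g n)); last first.
    by move=> n Hn; rewrite Hg // scaler0.
  by under [RHS]eq_bigr => j _ do rewrite addnK.
under eq_bigr => k _ do rewrite E scaler_sumr.
rewrite exchange_big /=.
have E2 : forall n : 'I_K.+1, \sum_(k < K.+1) tau R k *: (if (k <= n)%N then sj R (n - k) *: g n else 0)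
   = (n == 0%N :> nat)%:R *: g n.
  move=> n; rewrite -tau_conv scaler_suml.
  rewrite (big_ord_widen K.+1 (fun k => (tau R k * sj R (n - k)) *: g n)) // [RHS]big_mkcond /=.
  by apply: eq_bigr => k _; rewrite ltnS; case: ifP => _; rewrite ?scaler0 ?scalerA.
under eq_bigr => n _ do rewrite E2.
rewrite big_ord_recl /= scale1r big1 ?addr0 // => n _.
by rewrite /= scale0r.
Qed.

Lemma derivn_add (p : {poly R}) a b : (p^`(a))^`(b) = p^`(a + b).
Proof.
elim: b => [|b IH]; first by rewrite addn0.
by rewrite derivnS IH addnS -derivnS.
Qed.

Lemma inv_avg (p : {poly R}) K : (size p <= K)%N ->
  \sum_(k < K) tau R k *: (\sum_(j < K) sj R j *: p^`(2 * j))^`(2 * k) = p.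
Proof.
move=> Hp.
transitivity ((fun n => p^`(2 * n)) 0%N); last by [].
rewrite -(@inv_conv _ (fun n => p^`(2 * n)) K); last first.
  by move=> n Hn; apply: derivn_poly0; apply: (leq_trans Hp); lia.
apply: eq_bigr => k _; congr (_ *: _).
rewrite raddf_sum /=; apply: eq_bigr => j _.
by rewrite derivnZ derivn_add mulnDr.
Qed.

End Alg.



Lemma sum_evenodd (V : zmodType) (F : nat -> V) K :
  \sum_(i < 2 * K) F i = \sum_(j < K) (F (2 * j)%N + F (2 * j).+1).
Proof.
elim: K => [|K IH]; first by rewrite !big_ord0.
have -> : (2 * K.+1 = (2 * K).+2)%N by lia.
by rewrite !big_ord_recr /= IH addrA.
Qed.

Lemma avg_taylor (R : numFieldType) (Q P : {poly R}) K u :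
  Q^`() = P -> (size Q <= (2 * K).+1)%N ->
  Q.[u + 2^-1] - Q.[u - 2^-1] = (\sum_(j < K) sj R j *: P^`(2 * j)).[u].
Proof.
move=> HQ HS.
have c : GRing.comm u (2^-1 : R) by exact: mulrC.
have c' : GRing.comm u (- 2^-1 : R) by exact: mulrC.
rewrite (nderiv_taylor_wide c HS) (nderiv_taylor_wide c' HS) -sumrB.
rewrite big_ord_recl /= !expr0 subrr add0r.
under eq_bigr => i _ do rewrite -mulrBr.
have E : forall i : nat, (Q^`N(i.+1)).[u] = P^`(i).[u] / (i.+1)`!%:R.
  move=> i; have := nderivn_def i.+1 Q; rewrite derivSn HQ => ->.
  rewrite hornerMn -mulr_natr mulrK //.
  by rewrite unitfE pnatr_eq0 -lt0n fact_gt0.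
under eq_bigr => i _ do rewrite /bump /= E.
rewrite (@sum_evenodd _ (fun i => P^`(i).[u] / (i.+1)`!%:R * (2^-1 ^+ i.+1 - (- 2^-1) ^+ i.+1))) horner_sum.
apply: eq_bigr => j _.
rewrite hornerZ.
have h2 : (2^-1 : R) * 2 = 1 by rewrite mulVf // pnatr_eq0.
rewrite [X in _ + X](_ : _ = 0); last first.
  rewrite [in (- _) ^+ _]exprNn.
  have -> : ((2 * j).+2 = 2 * j.+1)%N by lia.
  by rewrite !exprM sqrrN !expr1n mul1r subrr mulr0.
rewrite addr0.
have -> : (- 2^-1 : R) ^+ (2*j).+1 = - (2^-1) ^+ (2*j).+1.
  by rewrite -mulN1r exprMn exprS exprM sqrrN !expr1n mulr1 mulN1r.
rewrite opprK.
have -> : (2^-1 : R) ^+ (2 * j).+1 + 2^-1 ^+ (2 * j).+1 = 2^-1 ^+ (2 * j).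
  have h3 : (2^-1 : R) + 2^-1 = 1 by field.
  by rewrite exprS -mulrDl h3 mul1r.
rewrite /sj invfM exprVn; ring.
Qed.



Lemma rint_poly (R : realType) (P Q : {poly R}) (c d x : R) : 0 < d -> Q^`() = P ->
  \int[lebesgue_measure]_(z in `[x - d / 2, x + d / 2]) P.[(z - c) / d]
  = d * (Q.[(x - c) / d + 2^-1] - Q.[(x - c) / d - 2^-1]).
Proof.
move=> d0 HQ.
pose L : {poly R} := d^-1 *: ('X - c%:P).
have HL : forall z, L.[z] = (z - c) / d.
  by move=> z; rewrite /L hornerZ hornerD hornerN hornerX hornerC mulrC.
pose G : {poly R} := d *: (Q \Po L).
have HG : G^`() = P \Po L.
  rewrite /G derivZ deriv_comp HQ /L derivZ derivB derivX derivC subr0.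
  by rewrite mulr_algr scalerA mulfV ?gt_eqF // scale1r.
have ab : x - d / 2 < x + d / 2 by lra.
have E : (fun z => P.[(z - c) / d]) = horner (P \Po L).
  by apply/funext => z; rewrite horner_comp HL.
rewrite E /Rintegral (@continuous_FTC2 _ _ (horner G)) //.
- rewrite -EFinB /= /G !hornerZ !horner_comp !HL -mulrBr; congr (d * (_ - _)).
  + congr Q.[_]; field; lra.
  + congr Q.[_]; field; lra.
- move=> z; apply: continuous_subspaceT => y; exact: continuous_horner.
- split.
  + move=> y _; exact: derivable_horner.
  + apply: cvg_at_right_filter; exact: continuous_horner.
  + apply: cvg_at_left_filter; exact: continuous_horner.
- by move=> y _; rewrite -derivE HG.
Qed.



Lemma poly_fun_eq (R : numFieldType) (p q : {poly R}) :
  (forall u, p.[u] = q.[u]) -> p = q.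
Proof.
move=> H; apply/eqP; rewrite -subr_eq0; apply/negPn/negP => Hn.
suff: (size [seq (k%:R : R)%R | k <- iota 0 (size (p - q)%R)] < size (p - q)%R)%N.
  by rewrite size_map size_iota ltnn.
apply: max_poly_roots => //.
  by apply/allP => u /mapP [k _ ->]; rewrite /root hornerD hornerN H subrr.
rewrite map_inj_uniq ?iota_uniq // => m n /eqP; by rewrite eqr_nat => /eqP.
Qed.

Lemma vdm_unit (R : realType) (Mm : int) (M : nat) : vdm R Mm M \in unitmx.
Proof.
pose a : 'rV[R]_M.+1 := \row_j ((j%:Z - Mm)%:~R).
have -> : vdm R Mm M = (Vandermonde M.+1 a)^T.
  by apply/matrixP => i j; rewrite !mxE.
rewrite unitmxE det_tr det_Vandermonde unitfE.
rewrite prodf_seq_neq0; apply/allP => i _ /=.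
rewrite prodf_seq_neq0; apply/allP => j _; apply/implyP => ij.
rewrite !mxE -intrB intr_eq0; apply/eqP => H; move: ij; have : (j%:Z = i%:Z) by lia. by move=> /eqP; rewrite eqz_nat => /eqP ->; rewrite ltnn.
Qed.


Theorem proposition1 (R : realType) (dx x1 : R) (i Mm Mp : int) (M : nat)
  (f : R -> R) (cf ch : nat -> R) :
  0 < dx ->
  Mm + Mp = M%:Z ->
  let xg := fun j : int => x1 + (j - 1)%:~R * dx in
  let xi := xg i in
  let pf := fun x : R => \sum_(m < M.+1) cf m * ((x - xi) / dx) ^+ m in
  let ph := fun x : R => \sum_(m < M.+1) ch m * ((x - xi) / dx) ^+ m in
  (forall l : int, - Mm <= l <= Mp -> pf (xg (i + l)) = f (xg (i + l))) ->
  (forall x : R,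
     pf x = dx^-1 * \int[lebesgue_measure]_(z in `[x - dx / 2, x + dx / 2]) ph z) ->
  forall xi' : R,
    ph (xi + xi' * dx)
      = \sum_(k < M.+1) @alpha_h R Mm M k xi' * f (xg (i + (k%:Z - Mm)))
    /\ pf (xi + xi' * dx)
      = \sum_(k < M.+1) @alpha_f R Mm M k xi' * f (xg (i + (k%:Z - Mm))).
Proof.
move=> dx0 hM xg xi pf ph Hint Havg u.
have dxn : dx != 0 by rewrite gt_eqF.
have Hx : forall l : int, (xg (i + l) - xi) / dx = l%:~R.
  move=> l; rewrite /xi /xg.
  have -> : (i + l - 1)%:~R = (i - 1)%:~R + l%:~R :> R.
    by rewrite -intrD; congr (_%:~R); lia.
  by field.
have Hu : (xi + u * dx - xi) / dx = u by field.
pose F (k : 'I_M.+1) := f (xg (i + (k%:Z - Mm))).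
pose V := vdm R Mm M.
have Hcf : forall m : 'I_M.+1, cf m = \sum_(k < M.+1) (invmx V) m k * F k.
  pose c : 'cV[R]_M.+1 := \col_(m < M.+1) cf m.
  pose Fv : 'cV[R]_M.+1 := \col_(k < M.+1) F k.
  have HV : V *m c = Fv.
    apply/matrixP => k j; rewrite !mxE.
    rewrite /F -Hint; last by move: (ltn_ord k); lia.
    rewrite /pf Hx; apply: eq_bigr => m _; rewrite !mxE mulrC.
    by [].
  have Hc : c = invmx V *m Fv by rewrite -HV mulKmx // vdm_unit.
  move=> m; have := congr1 (fun A : 'cV[R]_M.+1 => A m ord0) Hc; rewrite !mxE => ->.
  by apply: eq_bigr => k _; rewrite mxE.
pose K := M.+1.
pose Ph : {poly R} := \poly_(m < M.+1) ch m.
pose Pf : {poly R} := \poly_(m < M.+1) cf m.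
pose Q : {poly R} := \poly_(n < M.+2) (if n is n'.+1 then ch n' / n%:R else 0).
have HQ : Q^`() = Ph.
  apply/polyP => n; rewrite coef_deriv !coef_poly ltnS.
  case: ifP => _; last by rewrite mul0rn.
  by field; rewrite gt_eqF //; have := ler0n R n; lra.
have HQs : (size Q <= (2 * K).+1)%N by apply: (leq_trans (size_poly _ _)); rewrite /K; lia.
have Eph : ph = fun z => Ph.[(z - xi) / dx].
  by apply/funext => z; rewrite horner_poly.
have Epf : pf = fun z => Pf.[(z - xi) / dx].
  by apply/funext => z; rewrite horner_poly.
have HPA : Pf = \sum_(j < K) sj R j *: Ph^`(2 * j).
  apply: poly_fun_eq => v.
  have hv : (xi + v * dx - xi) / dx = v by field.
  have := Havg (xi + v * dx).
  rewrite {1}Epf /= hv => ->.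
  rewrite Eph (@rint_poly _ _ _ xi dx _ dx0 HQ) mulKf // hv.
  exact: avg_taylor.
have HPh : Ph = \sum_(k < K) tau R k *: Pf^`(2 * k).
  by rewrite HPA inv_avg // size_poly.
split.
- rewrite /ph Hu /alpha_h.
  under [RHS]eq_bigr => k _ do rewrite big_distrl /=.
  rewrite [RHS]exchange_big /=; apply: eq_bigr => m _.
  under [RHS]eq_bigr => k _ do rewrite mulrAC.
  rewrite -big_distrl /=; congr (_ * _).
  under [RHS]eq_bigr => k _ do rewrite big_distrl /=.
  rewrite [RHS]exchange_big /=.
  have Hch : ch m = \sum_(k < K) tau R k * (Pf`_(2 * k + m) *+ (2 * k + m) ^_ (2 * k)).
    have <- : Ph`_m = ch m by rewrite coef_poly ltn_ord.
    by rewrite HPh coef_sum; apply: eq_bigr => k _; rewrite coefZ coef_derivn.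
  rewrite Hch.
  have HJ : ((M - m)./2.+1 <= K)%N.
    by rewrite /K ltnS leq_half_double -muln2; lia.
  rewrite [RHS](big_ord_widen K (fun j : nat => \sum_(k < M.+1) tau R j * (m + 2 * j)`!%:R / m`!%:R * invmx (vdm R Mm M) (inord (m + 2 * j)) k * f (xg (i + (k%:Z - Mm)))) HJ) [RHS]big_mkcond /=.
  apply: eq_bigr => j _.
  have Hiff : (j < (M - m)./2.+1)%N = (2 * j + m < M.+1)%N.
    by rewrite ltnS geq_half_double -muln2; move: (ltn_ord m); lia.
  rewrite Hiff coef_poly; case: ifP => Hc; last by rewrite mul0rn mulr0.
  under eq_bigr => k _ do rewrite -mulrA.
  rewrite -mulr_sumr -Hcf inordK; last by rewrite addnC.
  rewrite (addnC m).
  have Hf := @ffact_fact (2 * j + m) (2 * j) (leq_addr _ _).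
  rewrite addKn in Hf.
  have Hb : (m`!%:R : R) != 0 by rewrite pnatr_eq0 -lt0n fact_gt0.
  by rewrite -Hf natrM; field.
- rewrite /pf Hu /alpha_f.
  under [RHS]eq_bigr => k _ do rewrite big_distrl /=.
  rewrite [RHS]exchange_big /=; apply: eq_bigr => m _.
  under [RHS]eq_bigr => k _ do rewrite mulrAC.
  by rewrite -big_distrl /= Hcf.
Qed.
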